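(* Let $d_2,d_3\ge 2$ and $d_1=d_2d_3-1$. Then the SLOCC maximal states of $\mathbb{C}^{d_1}\otimes\mathbb{C}^{d_2}\otimes\mathbb{C}^{d_3}$ fall into exactly $\min\{d_2,d_3\}$ SLOCC equivalence classes.
   Context: $|\psi\rangle\le_{\mathrm{SLOCC}}|\phi\rangle$ means $(L_1\otimes L_2\otimes L_3)|\phi\rangle=|\psi\rangle$ for some linear operators $L_i$ on $\mathbb{C}^{d_i}$; two states are SLOCC equivalent if each is $\le_{\mathrm{SLOCC}}$ the other (equivalently, they are related by $L_1\otimes L_2\otimes L_3$ with all $L_i$ invertible). A state $|\phi\rangle$ is SLOCC maximal if for every $|\psi\rangle$ in the space, $|\phi\rangle\le_{\mathrm{SLOCC}}|\psi\rangle$ implies $|\psi\rangle\le_{\mathrm{SLOCC}}|\phi\rangle$. *)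

(* Defs.v *)
From HB Require Import structures.
From mathcomp Require Import all_boot all_order all_algebra.
Set Implicit Arguments. Unset Strict Implicit. Unset Printing Implicit Defensive.
Import Order.TTheory GRing.Theory Num.Theory.
Local Open Scope ring_scope.

Definition tensor3 (C : Type) (d1 d2 d3 : nat) :=
  {ffun 'I_d1 * 'I_d2 * 'I_d3 -> C}.

Definition slocc_act (C : numClosedFieldType) (d1 d2 d3 : nat)
  (L1 : 'M[C]_d1) (L2 : 'M[C]_d2) (L3 : 'M[C]_d3) (phi : tensor3 C d1 d2 d3)
  : tensor3 C d1 d2 d3 :=
  [ffun ijk : 'I_d1 * 'I_d2 * 'I_d3 =>
     \sum_(a < d1) \sum_(b < d2) \sum_(c < d3)
        L1 ijk.1.1 a * L2 ijk.1.2 b * L3 ijk.2 c * phi (a, b, c)].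

Definition slocc_le (C : numClosedFieldType) (d1 d2 d3 : nat)
  (psi phi : tensor3 C d1 d2 d3) : Prop :=
  exists (L1 : 'M[C]_d1) (L2 : 'M[C]_d2) (L3 : 'M[C]_d3),
    slocc_act L1 L2 L3 phi = psi.

Definition slocc_equiv (C : numClosedFieldType) (d1 d2 d3 : nat)
  (psi phi : tensor3 C d1 d2 d3) : Prop :=
  slocc_le psi phi /\ slocc_le phi psi.

Definition slocc_maximal (C : numClosedFieldType) (d1 d2 d3 : nat)
  (phi : tensor3 C d1 d2 d3) : Prop :=
  forall psi : tensor3 C d1 d2 d3, slocc_le phi psi -> slocc_le psi phi.

(* Main.v *)
Require Import Defs.
From HB Require Import structures.
From mathcomp Require Import all_boot all_order all_algebra.
From Stdlib Require Import Classical.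
Set Implicit Arguments. Unset Strict Implicit. Unset Printing Implicit Defensive.
Import Order.TTheory GRing.Theory Num.Theory.

Section Helpers.
Local Open Scope ring_scope.
Variable C : numClosedFieldType.
Variables d1 d2 d3 : nat.
Implicit Types (phi psi : tensor3 C d1 d2 d3).

Definition slice phi (a : 'I_d1) : 'M[C]_(d2, d3) := \matrix_(k, l) phi (a, k, l).
Definition flat phi : 'M[C]_(d1, d2 * d3) := \matrix_(a, x) mxvec (slice phi a) 0 x.

Lemma row_flat phi a : row a (flat phi) = mxvec (slice phi a).
Proof. by apply/rowP => x; rewrite !mxE. Qed.

Lemma slice_inj phi psi : (forall a, slice phi a = slice psi a) -> phi = psi.
Proof.
move=> H; apply/ffunP => [[[a k] l]].
by have := congr1 (fun M : 'M[C]_(d2,d3) => M k l) (H a); rewrite /slice !mxE.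
Qed.

Lemma act_slice L1 L2 L3 phi a :
  slice (slocc_act L1 L2 L3 phi) a = \sum_b L1 a b *: (L2 *m slice phi b *m L3^T).
Proof.
apply/matrixP => k l; rewrite /slice !mxE ffunE /= summxE.
apply: eq_bigr => b _; rewrite !mxE big_distrr /=.
rewrite exchange_big /=; apply: eq_bigr => c _.
rewrite !mxE big_distrl big_distrr /=; apply: eq_bigr => e _.
by rewrite !mxE -!mulrA [phi _ * _]mulrC.
Qed.


Lemma sub_flat_comb (Y : 'M[C]_(d2,d3)) phi :
  (mxvec Y <= flat phi)%MS -> exists c : 'I_d1 -> C, Y = \sum_a c a *: slice phi a.
Proof.
case/submxP => D H; exists (fun a => D 0 a); apply: (can_inj mxvecK).
rewrite H mulmx_sum_row linear_sum; apply: eq_bigr => a _.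
by rewrite row_flat linearZ.
Qed.

Lemma comb_sub_flat psi phi (D : 'M[C]_d1) :
  (forall a, slice psi a = \sum_b D a b *: slice phi b) -> (flat psi <= flat phi)%MS.
Proof.
move=> H; apply/row_subP => a; rewrite row_flat H linear_sum.
apply: summx_sub => b _; rewrite linearZ; apply: scalemx_sub.
by move: (row_sub b (flat phi)); rewrite row_flat.
Qed.

Lemma flat_sub_comb psi phi :
  (flat psi <= flat phi)%MS -> exists D : 'M[C]_d1,
     forall a, slice psi a = \sum_b D a b *: slice phi b.
Proof.
case/submxP => D H; exists D => a; apply: (can_inj mxvecK).
have := congr1 (row a) H; rewrite row_flat => ->.
rewrite row_mul mulmx_sum_row linear_sum; apply: eq_bigr => b _.
by rewrite row_flat linearZ mxE.
Qed.

Lemma le_of_slices psi phi (L1 : 'M[C]_d1) (L2 : 'M[C]_d2) (L3 : 'M[C]_d3) :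
  (forall a, slice psi a = \sum_b L1 a b *: (L2 *m slice phi b *m L3^T)) ->
  slocc_le psi phi.
Proof.
move=> H; exists L1, L2, L3; apply: slice_inj => a; by rewrite act_slice H.
Qed.

End Helpers.

Section Pairing.
Local Open Scope ring_scope.
Variable C : numClosedFieldType.
Variables d2 d3 : nat.

Definition pr (A Y : 'M[C]_(d2, d3)) := \sum_i \sum_j A i j * Y i j.

Lemma pr_tr A Y : pr A Y = \tr (Y *m A^T).
Proof.
rewrite /pr /mxtrace; apply: eq_bigr => i _; rewrite !mxE.
by apply: eq_bigr => j _; rewrite mxE mulrC.
Qed.

Lemma pr_mul A P X Q : pr A (P *m X *m Q) = pr (P^T *m A *m Q^T) X.
Proof.
rewrite !pr_tr mxtrace_mulC !mulmxA mxtrace_mulC !mulmxA !trmx_mul !trmxK.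
by rewrite mxtrace_mulC !mulmxA.
Qed.

Lemma pr_sum n (c : 'I_n -> C) A (Y : 'I_n -> 'M[C]_(d2,d3)) :
  pr A (\sum_a c a *: Y a) = \sum_a c a * pr A (Y a).
Proof.
rewrite pr_tr mulmx_suml raddf_sum; apply: eq_bigr => a _.
rewrite -scalemxAl pr_tr; exact: mxtraceZ.
Qed.

Lemma prB A Y Z c : pr A (Y - c *: Z) = pr A Y - c * pr A Z.
Proof.
rewrite !pr_tr mulmxDl mxtraceD -scaleNr -scalemxAl mxtraceZ.
by rewrite mulNr.
Qed.

Lemma pr_delta A k l : pr A (delta_mx k l) = A k l.
Proof.
rewrite /pr (bigD1 k) //= [X in _ + X]big1 => [|i /negPf ik]; last first.
  by apply: big1 => j _; rewrite mxE ik mulr0.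
rewrite addr0 (bigD1 l) //= [X in _ + X]big1 => [|j /negPf jl]; last by rewrite mxE jl andbF mulr0.
by rewrite mxE !eqxx mulr1 addr0.
Qed.

Lemma pr_vec A Y : mxvec Y *m (mxvec A)^T = (pr A Y)%:M.
Proof.
apply/rowP=> i; rewrite {i}ord1 !mxE (reindex _ (curry_mxvec_bij _ _)) /=.
rewrite mulr1n /pr pair_bigA /=; apply: eq_bigr => [[i j]] _ /=.
by rewrite !mxE !mxvecE mulrC.
Qed.

End Pairing.
Section Gen.
Local Open Scope ring_scope.
Variable C : numClosedFieldType.

Lemma nz_entry m n (M : 'M[C]_(m, n)) : M != 0 -> exists i j, M i j != 0.
Proof.
move=> nz; apply/not_all_not_ex => H; apply/negP: nz; rewrite negbK.
apply/eqP/matrixP => i j; rewrite mxE; apply/eqP; apply: contraT => Hij; exfalso.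
by apply: (H i); exists j.
Qed.

Lemma pidE m n r (k : 'I_m) (l : 'I_n) :
  (pid_mx r : 'M[C]_(m,n)) k l = ((k == l :> nat) && (k < r)%N)%:R.
Proof. by rewrite mxE. Qed.

Lemma ker_row n (A : 'M[C]_n) : A \notin unitmx ->
  exists v : 'rV[C]_n, v *m A = 0 /\ exists k, v 0 k != 0.
Proof.
move=> nu; have : kermx A != 0 by rewrite kermx_eq0 row_free_unit.
case/nz_entry => i [k Hk]; exists (row i (kermx A)); split.
  by apply/sub_kermxP; exact: row_sub.
by exists k; rewrite mxE.
Qed.

End Gen.

Section Rep.
Local Open Scope ring_scope.
Variable C : numClosedFieldType.
Variables d1 d2 d3 : nat.
Hypothesis hd2 : (2 <= d2)%N.
Hypothesis hd3 : (2 <= d3)%N.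
Hypothesis hd1 : d1 = (d2 * d3 - 1)%N.

Definition bvec r : 'cV[C]_(d2 * d3) := (mxvec (pid_mx r : 'M[C]_(d2, d3)))^T.

Definition repT (M : 'M[C]_(d1, d2 * d3)) : tensor3 C d1 d2 d3 :=
  [ffun ijk => M ijk.1.1 (mxvec_index ijk.1.2 ijk.2)].

Lemma flat_repT M : flat (repT M) = M.
Proof.
apply/matrixP => a x; rewrite mxE; case/mxvec_indexP: x => k l.
by rewrite mxvecE mxE ffunE.
Qed.

Lemma inW r Y : (mxvec Y <= kermx (bvec r))%MS = (pr (pid_mx r) Y == 0).
Proof.
rewrite sub_kermx /bvec pr_vec; apply/eqP/eqP => [H|->]; last first.
  by apply/matrixP => i j; rewrite !mxE mul0rn.
by have := congr1 (fun M : 'M[C]_1 => M 0 0) H; rewrite !mxE mulr1n.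
Qed.

Lemma rank_ker r : (0 < r)%N -> \rank (kermx (bvec r)) = d1.
Proof.
move=> r0; rewrite mxrank_ker hd1; congr (_ - _)%N.
apply/eqP; rewrite eqn_leq rank_leq_col lt0n mxrank_eq0.
have i0 : (0 < d2)%N by apply: leq_trans hd2.
have j0 : (0 < d3)%N by apply: leq_trans hd3.
apply/eqP => /matrixP/(_ (mxvec_index (Ordinal i0) (Ordinal j0)) 0).
by rewrite !mxE mxvecE pidE /= r0 mulr1n; apply/eqP; exact: oner_neq0.
Qed.

Definition rep r (e : \rank (kermx (bvec r)) = d1) : tensor3 C d1 d2 d3 :=
  repT (castmx (e, erefl) (row_base (kermx (bvec r)))).

Lemma rep_span r e Y : (mxvec Y <= flat (@rep r e))%MS = (pr (pid_mx r) Y == 0).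
Proof.
by rewrite /rep flat_repT eqmx_cast eq_row_base inW.
Qed.

Lemma rep_slice r e a : pr (pid_mx r) (slice (@rep r e) a) = 0.
Proof.
by apply/eqP; rewrite -rep_span -row_flat row_sub.
Qed.


Lemma inv_of_span r (T psi : tensor3 C d1 d2 d3) L1 L2 L3 :
  T = slocc_act L1 L2 L3 psi ->
  (forall Y, pr (pid_mx r) Y = 0 -> (mxvec Y <= flat T)%MS) ->
  L2 \in unitmx /\ L3 \in unitmx.
Proof.
move=> -> HS.
have j0 : (0 < d3)%N by apply: leq_trans hd3.
have i0 : (0 < d2)%N by apply: leq_trans hd2.
split; apply: contraT => /ker_row [v [Hv [k Hk]]].
- pose l : 'I_d3 := if (k == 0 :> nat) then Ordinal hd3 else Ordinal j0.
  have kl : (k != l :> nat) by rewrite /l; case: ifP => /= /eqP H; [rewrite H | apply/eqP].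
  have H0 : pr (pid_mx r : 'M[C]_(d2,d3)) (delta_mx k l) = 0.
    by rewrite pr_delta pidE (negPf kl).
  have [c Hc] := sub_flat_comb (HS _ H0).
  have : v *m delta_mx k l = 0.
    rewrite Hc mulmx_sumr big1 // => a _; rewrite -scalemxAr act_slice mulmx_sumr.
    rewrite big1 ?scaler0 // => b _.
    by rewrite -scalemxAr !mulmxA Hv !mul0mx scaler0.
  move/matrixP/(_ 0 l); rewrite !mxE (bigD1 k) //= big1 => [|t /negPf tk].
    by rewrite !mxE !eqxx mulr1 addr0 => /eqP; rewrite (negPf Hk).
  by rewrite mxE tk mulr0.
- pose l : 'I_d2 := if (k == 0 :> nat) then Ordinal hd2 else Ordinal i0.
  have kl : (l != k :> nat) by rewrite /l; case: ifP => /= /eqP H; [rewrite H | rewrite eq_sym; apply/eqP].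
  have H0 : pr (pid_mx r : 'M[C]_(d2,d3)) (delta_mx l k) = 0.
    by rewrite pr_delta pidE (negPf kl).
  have [c Hc] := sub_flat_comb (HS _ H0).
  have : delta_mx l k *m v^T = 0.
    rewrite Hc mulmx_suml big1 // => a _; rewrite -scalemxAl act_slice mulmx_suml.
    rewrite big1 ?scaler0 // => b _.
    by rewrite -scalemxAl -!mulmxA -trmx_mul Hv trmx0 !mulmx0 scaler0.
  move/matrixP/(_ l 0); rewrite !mxE (bigD1 k) //= big1 => [|t /negPf tk].
    by rewrite !mxE !eqxx mul1r addr0 => /eqP; rewrite ?mxE (negPf Hk).
  by rewrite mxE tk andbF mul0r.
Qed.


Lemma mxvecZ' (c : C) (M : 'M[C]_(d2, d3)) : mxvec (c *: M) = c *: mxvec M.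
Proof. by apply/rowP => x; case/mxvec_indexP: x => i j; rewrite mxvecE [RHS]mxE mxvecE mxE. Qed.

Lemma act1_slice L2 L3 (psi : tensor3 C d1 d2 d3) b :
  slice (slocc_act 1%:M L2 L3 psi) b = L2 *m slice psi b *m L3^T.
Proof.
rewrite act_slice (bigD1 b) //= big1 => [|a /negPf ab]; last first.
  by rewrite mxE eq_sym ab mulr0n scale0r.
by rewrite mxE eqxx mulr1n scale1r addr0.
Qed.

Lemma le_rep_gen r e (psi : tensor3 C d1 d2 d3) L2 L3 :
  L2 \in unitmx -> L3 \in unitmx ->
  (forall b, pr (pid_mx r) (L2 *m slice psi b *m L3^T) = 0) ->
  slocc_le psi (@rep r e).
Proof.
move=> u2 u3 H; set psi' := slocc_act 1%:M L2 L3 psi.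
have sub : (flat psi' <= flat (rep e))%MS.
  apply/row_subP => b; rewrite row_flat act1_slice rep_span; apply/eqP; exact: H.
case: (flat_sub_comb sub) => D HD.
apply: (@le_of_slices _ _ _ _ _ _ D (invmx L2) (invmx L3)) => b.
have -> : slice psi b = invmx L2 *m slice psi' b *m (invmx L3)^T.
  rewrite act1_slice !mulmxA mulVmx // mul1mx -mulmxA -trmx_mul mulVmx //.
  by rewrite trmx1 mulmx1.
rewrite HD mulmx_sumr mulmx_suml; apply: eq_bigr => a _.
by rewrite -scalemxAr -scalemxAl.
Qed.

Lemma rep_max r e : slocc_maximal (@rep r e).
Proof.
move=> psi [L1 [L2 [L3 Hact]]].
have [u2 u3] := inv_of_span (esym Hact) (fun Y h => etrans (rep_span e Y) (introT eqP h)).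
apply: (@le_rep_gen r e psi L2 L3 u2 u3) => b.
set psi' := slocc_act 1%:M L2 L3 psi.
have sub1 : (flat (rep e) <= flat psi')%MS.
  apply: (@comb_sub_flat _ _ _ _ _ _ L1) => a.
  rewrite -Hact act_slice; apply: eq_bigr => c _; by rewrite act1_slice.
apply/eqP; apply: contraT => nz.
have full : forall Z, (mxvec Z <= flat psi')%MS.
  move=> Z; set t := pr (pid_mx r) (L2 *m slice psi b *m L3^T) in nz.
  have -> : Z = (Z - (pr (pid_mx r) Z / t) *: (L2 *m slice psi b *m L3^T))
                 + (pr (pid_mx r) Z / t) *: (L2 *m slice psi b *m L3^T) by rewrite subrK.
  rewrite raddfD /=; apply: addmx_sub.
    apply: submx_trans sub1; rewrite rep_span prB divfK // subrr //.
  rewrite mxvecZ'; apply: scalemx_sub; rewrite -act1_slice -row_flat; exact: row_sub.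
have : (1%:M <= flat psi')%MS.
  by apply/row_subP => i; rewrite -(vec_mxK (row i 1%:M)); exact: full.
move/mxrankS; rewrite mxrank1 => H; have := leq_trans H (rank_leq_row _).
rewrite hd1; have : (0 < d2 * d3)%N by rewrite muln_gt0; apply/andP; split;
  [apply: leq_trans hd2 | apply: leq_trans hd3].
by case: (d2 * d3)%N => // n _; rewrite subn1 /= ltnn.
Qed.


Lemma pr_ann_pid r (B : 'M[C]_(d2,d3)) (i0 : 'I_d2) (j0 : 'I_d3) :
  (i0 = 0 :> nat) -> (j0 = 0 :> nat) -> (0 < r)%N ->
  (forall Y, pr (pid_mx r) Y = 0 -> pr B Y = 0) -> B = B i0 j0 *: pid_mx r.
Proof.
move=> hi hj r0 H; apply/matrixP => k l; rewrite mxE pidE.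
case kl: (_ && _).
  have := H (delta_mx k l - 1 *: delta_mx i0 j0).
  rewrite !prB !pr_delta !pidE kl hi hj r0 /= !mul1r subrr => /(_ erefl) /eqP.
  by rewrite subr_eq0 => /eqP ->; rewrite mulr1.
have := H (delta_mx k l); rewrite !pr_delta pidE kl => /(_ erefl) ->.
by rewrite mulr0.
Qed.

Lemma sandwich_sum n (M : 'M[C]_d2) (N : 'M[C]_(d3,d3)) (c : 'I_n -> C) (X : 'I_n -> 'M[C]_(d2,d3)) :
  M *m (\sum_a c a *: X a) *m N = \sum_a c a *: (M *m X a *m N).
Proof.
rewrite mulmx_sumr mulmx_suml; apply: eq_bigr => a _.
by rewrite -scalemxAr -scalemxAl.
Qed.

Lemma rep_distinct r1 r2 e1 e2 :
  (0 < r1)%N -> (r1 <= minn d2 d3)%N -> (0 < r2)%N -> (r2 <= minn d2 d3)%N ->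
  slocc_le (@rep r1 e1) (@rep r2 e2) -> r1 = r2.
Proof.
move=> p1 m1 p2 m2 [L1 [L2 [L3 Hact]]].
have [u2 u3] := inv_of_span (esym Hact) (fun Y h => etrans (rep_span e1 Y) (introT eqP h)).
set B := (invmx L2)^T *m pid_mx r2 *m invmx L3.
have HB : forall Y, pr (pid_mx r1) Y = 0 -> pr B Y = 0.
  move=> Y /eqP; rewrite -rep_span => /sub_flat_comb [c ->].
  rewrite /B -[invmx L3]trmxK -pr_mul sandwich_sum pr_sum big1 // => a _.
  rewrite -Hact act_slice sandwich_sum pr_sum big1 ?mulr0 // => b _.
  rewrite !mulmxA mulVmx // mul1mx -mulmxA -trmx_mul mulVmx // trmx1 mulmx1.
  by rewrite rep_slice mulr0.
have i0 : (0 < d2)%N by apply: leq_trans hd2.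
have j0 : (0 < d3)%N by apply: leq_trans hd3.
have := @pr_ann_pid r1 B (Ordinal i0) (Ordinal j0) erefl erefl p1 HB.
have rB : \rank B = r2.
  rewrite /B mxrankMfree ?row_free_unit ?unitmx_inv //.
  rewrite (eqmxMfull _ (_ : row_full _)) ?row_full_unit ?unitmx_tr ?unitmx_inv //.
  by rewrite rank_pid_mx // (leq_trans m2) // ?geq_minl ?geq_minr.
case: (eqVneq (B (Ordinal i0) (Ordinal j0)) 0) => [-> | nz] HBe.
  by move: rB; rewrite HBe scale0r mxrank0 => r20; move: p2; rewrite -r20.
move: rB; rewrite HBe mxrank_scale_nz // rank_pid_mx //.
  by rewrite (leq_trans m1) // ?geq_minl ?geq_minr.
by rewrite (leq_trans m1) // ?geq_minl ?geq_minr.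
Qed.


Lemma classify (phi : tensor3 C d1 d2 d3) : slocc_maximal phi ->
  exists r, [/\ (0 < r)%N, (r <= minn d2 d3)%N &
    forall r', r' = r -> forall e : \rank (kermx (bvec r')) = d1, slocc_equiv phi (@rep r' e)].
Proof.
move=> Hmax.
have pos : (0 < d2 * d3)%N by rewrite muln_gt0; apply/andP; split;
  [apply: leq_trans hd2 | apply: leq_trans hd3].
have rk : (\rank (flat phi) < d2 * d3)%N.
  apply: leq_ltn_trans (rank_leq_row _) _; rewrite hd1.
  by move: pos; case: (d2 * d3)%N => // n _; rewrite subn1.
have : cokermx (flat phi) != 0.
  by rewrite -mxrank_eq0 mxrank_coker subn_eq0 -ltnNge rk.
case/nz_entry => i [j Kij].
set A : 'M[C]_(d2,d3) := vec_mx (col j (cokermx (flat phi)))^T.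
have HA : forall a, pr A (slice phi a) = 0.
  move=> a; have := pr_vec A (slice phi a).
  rewrite /A vec_mxK trmxK -row_flat colE mulmxA -row_mul mulmx_coker row0 mul0mx.
  by move/matrixP/(_ 0 0); rewrite !mxE mulr1n => <-.
have A0 : A != 0.
  apply/eqP => A0; move: Kij.
  have : mxvec A = (col j (cokermx (flat phi)))^T by rewrite /A vec_mxK.
  rewrite A0 => /matrixP/(_ 0 i); rewrite !mxE => <-.
  by case/mxvec_indexP: i => k l; rewrite mxvecE mxE eqxx.
exists (\rank A); split.
- by rewrite lt0n mxrank_eq0.
- by rewrite leq_min rank_leq_row rank_leq_col.
move=> r' -> e.
have le1 : slocc_le phi (@rep (\rank A) e).
  apply: (@le_rep_gen _ e phi (col_ebase A)^T (row_ebase A)).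
  - by rewrite unitmx_tr col_ebase_unit.
  - exact: row_ebase_unit.
  by move=> b; rewrite pr_mul !trmxK mulmx_ebase HA.
by split => //; exact: Hmax _ le1.
Qed.

End Rep.

Unset Implicit Arguments.

Theorem mainTheorem6 (C : numClosedFieldType) (d1 d2 d3 : nat) :
  (2 <= d2)%N -> (2 <= d3)%N -> d1 = (d2 * d3 - 1)%N ->
  exists reps : 'I_(minn d2 d3) -> tensor3 C d1 d2 d3,
    (forall i, slocc_maximal (reps i)) /\
    (forall i j, slocc_equiv (reps i) (reps j) -> i = j) /\
    (forall phi : tensor3 C d1 d2 d3, slocc_maximal phi ->
       exists i, slocc_equiv phi (reps i)).
Proof.
move=> h2 h3 h1.
have ek : forall i : 'I_(minn d2 d3), \rank (kermx (bvec C d2 d3 i.+1)) = d1.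
  by move=> i; exact: (@rank_ker C d1 d2 d3 h2 h3 h1 i.+1 (ltn0Sn i)).
exists (fun i => rep (ek i)); split; [|split].
- move=> i; exact: rep_max.
- move=> i j [le _]; apply: val_inj; apply/succn_inj.
  exact: (rep_distinct h2 h3 (ltn0Sn i) (ltn_ord i) (ltn0Sn j) (ltn_ord j) le).
- move=> phi Hm; have [r [r0 rm H]] := classify h2 h3 h1 Hm.
  have ir : (r.-1 < minn d2 d3)%N by rewrite prednK.
  by exists (Ordinal ir); apply: H; rewrite /= prednK.
Qed.
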